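(* Let $Y\subseteq\Omega$, $D\in\mathcal{I}^{\mathbf{c}}(Y)$ and $e\in\max(Y)$. Then $$\pi(Y,D)-\pi(Y-\{e\},D-\{e\})=\begin{cases}\eta_{(e)}\Big(\prod_{i\in\langle\{e\}\rangle_Y-\{e\}}\tau_{(i)}\Big)x^{|\langle\{e\}\rangle_Y|}\,\pi(Y-\langle\{e\}\rangle_Y,D),& e\notin D;\\ 0,& e\in D-\min(D);\\ -\Big(\prod_{i\in\langle\{e\}\rangle_Y-\{e\}}\tau_{(i)}\Big)x^{|\langle\{e\}\rangle_Y|}\,\pi(Y-\langle\{e\}\rangle_Y,D-\{e\}),& e\in\min(D).\end{cases}$$
   Context: $\Omega$ is a finite set and $\mathbf{P}=(\Omega,\preccurlyeq_{\mathbf{P}})$ a poset. For $Y\subseteq\Omega$: $\max(Y)$, $\min(Y)$ are the maximal, minimal elements of $Y$ w.r.t. $\preccurlyeq_{\mathbf{P}}$; $\mathcal{I}(Y)$ is the set of down-closed subsets of $Y$ (induced order); $\mathcal{I}^{\mathbf{c}}(Y)$ is the set of up-closed subsets of $Y$; for $A\subseteq Y$, $\langle A\rangle_Y=\{y\in Y:\exists a\in A, y\preccurlyeq_{\mathbf{P}}a\}$. $K$ is a commutative ring, $\tau,\eta\in K^{\Omega}$. For $D,I\subseteq\Omega$, $\varphi(D,I)=(-1)^{|I\cap D|}\big(\prod_{i\in I-\max(I)}\tau_{(i)}\big)\big(\prod_{i\in\max(I)-D}\eta_{(i)}\big)$ if $I\cap D\subseteq\max(I)$, and $0$ otherwise;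 for $D\subseteq Y\subseteq\Omega$, $\pi(Y,D)=\sum_{I\in\mathcal{I}(Y)}\varphi(D,I)x^{|I|}\in K[x]$. *)

(* Defs.v *)
From HB Require Import structures.
From mathcomp Require Import all_boot all_order all_algebra.
Set Implicit Arguments. Unset Strict Implicit. Unset Printing Implicit Defensive.
Import GRing.Theory.
Local Open Scope ring_scope.

(* The finite set Omega is a finType T; the poset P is given by a relation
   le : rel T, assumed to be a partial order in the theorem statement. *)

Section Defs.
Variable T : finType.
Variable le : rel T.

Definition maxs (Y : {set T}) : {set T} :=
  [set y in Y | [forall z in Y, le y z ==> (z == y)]].
Definition mins (Y : {set T}) : {set T} :=
  [set y in Y | [forall z in Y, le z y ==> (z == y)]].

Definition downclosed (Y I : {set T}) : bool :=
  (I \subset Y) && [forall i in I, forall y in Y, le y i ==> (y \in I)].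
Definition upclosed (Y D : {set T}) : bool :=
  (D \subset Y) && [forall d in D, forall y in Y, le d y ==> (y \in D)].

Definition dclos (Y A : {set T}) : {set T} :=
  [set y in Y | [exists a in A, le y a]].

Variable K : comNzRingType.
Variables tau eta : T -> K.

Definition phiD (D I : {set T}) : K :=
  if I :&: D \subset maxs I then
    (-1) ^+ #|I :&: D| * (\prod_(i in I :\: maxs I) tau i)
      * (\prod_(i in maxs I :\: D) eta i)
  else 0.

Definition piY (Y D : {set T}) : {poly K} :=
  \sum_(I in powerset Y | downclosed Y I) phiD D I *: 'X^#|I|.

End Defs.

(* Main.v *)
Require Import Defs.
From HB Require Import structures.
From mathcomp Require Import all_boot all_order all_algebra.
From mathcomp Require Import ring.
Import GRing.Theory.
Local Open Scope ring_scope.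

Set Implicit Arguments. Unset Strict Implicit.

Section Aux.
Variables (T : finType) (le : rel T).
Hypotheses (le_refl : reflexive le) (le_anti : antisymmetric le) (le_trans : transitive le).

Lemma maxsP (Y : {set T}) x : reflect (x \in Y /\ forall z, z \in Y -> le x z -> z = x) (x \in maxs le Y).
Proof.
rewrite /maxs inE; apply: (iffP andP) => [[xY /forall_inP H]|[xY H]]; split => //.
- by move=> z zY lxz; apply/eqP; exact: (implyP (H z zY)).
- by apply/forall_inP => z zY; apply/implyP => /(H z zY) ->.
Qed.

Lemma minsP (Y : {set T}) x : reflect (x \in Y /\ forall z, z \in Y -> le z x -> z = x) (x \in mins le Y).
Proof.
rewrite /mins inE; apply: (iffP andP) => [[xY /forall_inP H]|[xY H]]; split => //.
- by move=> z zY lxz; apply/eqP; exact: (implyP (H z zY)).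
- by apply/forall_inP => z zY; apply/implyP => /(H z zY) ->.
Qed.

Lemma maxs_sub (Y : {set T}) x : x \in maxs le Y -> x \in Y.
Proof. by case/maxsP. Qed.

Lemma downclosedP (Y I : {set T}) : reflect (I \subset Y /\ forall i y, i \in I -> y \in Y -> le y i -> y \in I)
  (downclosed le Y I).
Proof.
apply: (iffP andP) => [[sIY /forall_inP H]|[sIY H]]; split => //.
- by move=> i y iI yY lyi; move: (H i iI) => /forall_inP /(_ y yY) /implyP; apply.
- apply/forall_inP => i iI; apply/forall_inP => y yY; apply/implyP; exact: H.
Qed.

Lemma upclosedP (Y D : {set T}) : reflect (D \subset Y /\ forall d y, d \in D -> y \in Y -> le d y -> y \in D)
  (upclosed le Y D).
Proof.
apply: (iffP andP) => [[sIY /forall_inP H]|[sIY H]]; split => //.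
- by move=> i y iI yY lyi; move: (H i iI) => /forall_inP /(_ y yY) /implyP; apply.
- apply/forall_inP => i iI; apply/forall_inP => y yY; apply/implyP; exact: H.
Qed.

Lemma dclos1E (Y : {set T}) e y : (y \in dclos le Y [set e]) = (y \in Y) && le y e.
Proof.
rewrite inE; congr andb; apply/existsP/idP => [[a /andP[/set1P -> //]]|h].
by exists e; rewrite inE eqxx.
Qed.

Variable K : comNzRingType.
Variables tau eta : T -> K.

Lemma phiD_ext (D D' I : {set T}) : I :&: D = I :&: D' -> phiD le tau eta D I = phiD le tau eta D' I.
Proof.
move=> h; rewrite /phiD h; case: ifP => // _; congr (_ * _); apply: eq_bigl => x.
rewrite !in_setD; case: (boolP (x \in maxs le I)) => hm; last by rewrite !andbF.
have xI := maxs_sub hm.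
by have := h; move/setP/(_ x); rewrite !inE xI /= => ->.
Qed.

End Aux.

Section Main.
Variables (T : finType) (le : rel T).
Hypotheses (le_refl : reflexive le) (le_anti : antisymmetric le) (le_trans : transitive le).
Variable K : comNzRingType.
Variables tau eta : T -> K.
Variables (Y D : {set T}) (e : T).
Hypotheses (HD : upclosed le Y D) (He : e \in maxs le Y).

Local Notation E := (dclos le Y [set e]).

Lemma eY : e \in Y. Proof. exact: maxs_sub He. Qed.

Lemma eE : e \in E. Proof. by rewrite dclos1E eY le_refl. Qed.

Lemma JE (J : {set T}) x : J \subset Y :\: E -> x \in J -> (x \in Y) && (x \notin E).
Proof. by move=> sJ xJ; have := subsetP sJ x xJ; rewrite in_setD andbC. Qed.

Lemma eJ (J : {set T}) : J \subset Y :\: E -> e \notin J.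
Proof. by move=> sJ; apply/negP => /(JE sJ); rewrite eE andbF. Qed.

Lemma maxsU (J : {set T}) : J \subset Y :\: E -> maxs le (E :|: J) = e |: maxs le J.
Proof.
move=> sJ; move: (He) => /maxsP [eY' He'].
apply/setP => x; apply/idP/idP.
- case/maxsP => xI Hx; rewrite in_setU1; case: (eqVneq x e) => //= xne.
  have xJ : x \in J.
    move: xI; rewrite in_setU; case/orP => // xE.
    move: (xE); rewrite dclos1E => /andP[_ lxe].
    by case/eqP: xne; apply/esym/Hx => //; rewrite in_setU eE.
  by apply/maxsP; split => // z zJ lxz; apply: Hx => //; rewrite in_setU zJ orbT.
- rewrite in_setU1 => /orP[/eqP->|/maxsP[xJ Hx]]; apply/maxsP.
  + split; first by rewrite in_setU eE.
    move=> z; rewrite in_setU => /orP[zE|zJ] lez; apply: He' => //.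
    * by move: zE; rewrite dclos1E => /andP[].
    * by case/andP: (JE sJ zJ).
  + split; first by rewrite in_setU xJ orbT.
    move=> z; rewrite in_setU => /orP[zE|zJ] lxz; last exact: Hx.
    move: zE; rewrite dclos1E => /andP[zY lze].
    case/andP: (JE sJ xJ) => xY; by rewrite dclos1E xY (le_trans lxz lze).
Qed.

Lemma cardEU (J : {set T}) : J \subset Y :\: E -> #|E :|: J| = (#|E| + #|J|)%N.
Proof.
move=> sJ; rewrite cardsU; suff ->: E :&: J = set0 by rewrite cards0 subn0.
apply/setP => x; rewrite in_setI in_set0; apply/negP => /andP[xE xJ].
by case/andP: (JE sJ xJ) => _; rewrite xE.
Qed.

Lemma prodU (J : {set T}) : J \subset Y :\: E ->
  \prod_(i in (E :|: J) :\: maxs le (E :|: J)) tau i =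
  (\prod_(i in E :\ e) tau i) * \prod_(i in J :\: maxs le J) tau i.
Proof.
move=> sJ; rewrite maxsU //.
have ->: (E :|: J) :\: (e |: maxs le J) = (E :\ e) :|: (J :\: maxs le J).
  apply/setP => x; rewrite !(in_setU, in_setD, in_setD1, in_setU1).
  rewrite in_set1; case: (eqVneq x e) => [->|xne] /=; first by rewrite (negbTE (eJ sJ)) andbF.
  case: (boolP (x \in maxs le J)) => xm /=; last by [].
  by case/andP: (JE sJ (maxs_sub xm)) => _ /negbTE ->.
rewrite -bigU /=; first by apply: eq_bigl => x; rewrite in_setU.
rewrite -setI_eq0; apply/eqP/setP => x; rewrite in_setI in_set0 !in_setD.
apply/negP => /andP[/andP[_ xE] /andP[_ xJ]].
by case/andP: (JE sJ xJ) => _; rewrite xE.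
Qed.


Local Notation phi := (phiD le tau eta).

Lemma phi_notD (J : {set T}) : J \subset Y :\: E -> e \notin D ->
  phi D (E :|: J) = eta e * (\prod_(i in E :\ e) tau i) * phi D J.
Proof.
move=> sJ eD; move: (HD) => /upclosedP [sDY HD'].
have ED : forall x, x \in E -> x \notin D.
  move=> x; rewrite dclos1E => /andP[xY lxe]; apply/negP => xD.
  by rewrite (HD' x e xD eY lxe) in eD.
rewrite /phiD prodU // maxsU //.
have ->: (E :|: J) :&: D = J :&: D.
  apply/setP => x; rewrite !in_setI in_setU andb_orl.
  by case: (boolP (x \in E)) => //= xE; rewrite (negbTE (ED x xE)).
have ->: (J :&: D \subset e |: maxs le J) = (J :&: D \subset maxs le J).
  apply/subsetP/subsetP => h x xJD.
    have := h x xJD; rewrite in_setU1 => /orP[/eqP xe|//].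
    by move: xJD; rewrite xe in_setI (negbTE eD) andbF.
  by rewrite in_setU1 h ?orbT.
have ->: (e |: maxs le J) :\: D = e |: (maxs le J :\: D).
  apply/setP => x; rewrite !(in_setD, in_setU1).
  by case: (eqVneq x e) => [->|] //=; rewrite eD.
rewrite big_setU1 /=; last by rewrite in_setD (negbTE (contraNN (@maxs_sub _ le _ _) (eJ sJ))) andbF.
case: ifP => _; last by rewrite mulr0.
ring.
Qed.

Lemma phi_notmin (J : {set T}) : J \subset Y :\: E -> e \in D -> e \notin mins le D ->
  phi D (E :|: J) = 0.
Proof.
move=> sJ eD; move: (HD) => /upclosedP [sDY HD'].
rewrite /mins inE eD /= => /forall_inPn [d dD]; rewrite negb_imply => /andP[lde dne].
rewrite /phiD maxsU //; case: ifP => // /subsetP H; exfalso.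
have dE: d \in E by rewrite dclos1E lde (subsetP sDY d dD).
have := H d; rewrite in_setI in_setU dE dD => /(_ isT).
rewrite in_setU1 (negbTE dne) /= => /maxs_sub dJ.
by case/andP: (JE sJ dJ) => _; rewrite dE.
Qed.

Lemma phi_min (J : {set T}) : J \subset Y :\: E -> e \in mins le D ->
  phi D (E :|: J) = - ((\prod_(i in E :\ e) tau i) * phi (D :\ e) J).
Proof.
move=> sJ /minsP [eD Hm].
have ->: phi (D :\ e) J = phi D J.
  apply: phiD_ext; apply/setP => x; rewrite !in_setI in_setD1.
  by case: (eqVneq x e) => [->|] //=; rewrite (negbTE (eJ sJ)).
rewrite /phiD prodU // maxsU //.
have ->: (E :|: J) :&: D = e |: (J :&: D).
  apply/setP => x; rewrite in_setU1 !in_setI in_setU.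
  case: (eqVneq x e) => [->|xne] /=; first by rewrite eE eD.
  case: (boolP (x \in E)) => xE /=; last by [].
  have xJ: x \notin J by apply/negP => /(JE sJ); rewrite xE andbF.
  rewrite (negbTE xJ) /=; apply/negbTE/negP => xD.
  move: xE; rewrite dclos1E => /andP[_ lxe].
  by rewrite (Hm x xD lxe) eqxx in xne.
have ->: (e |: (J :&: D) \subset e |: maxs le J) = (J :&: D \subset maxs le J).
  apply/subsetP/subsetP => h x xJD.
    have := h x; rewrite !in_setU1 xJD orbT => /(_ isT) /orP[/eqP xe|//].
    by move: xJD; rewrite xe in_setI (negbTE (eJ sJ)).
  by move: xJD; rewrite !in_setU1 => /orP[->//|/h ->]; rewrite orbT.
have ->: (e |: maxs le J) :\: D = maxs le J :\: D.
  apply/setP => x; rewrite !in_setD in_setU1.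
  by case: (eqVneq x e) => [->|] //=; rewrite eD.
rewrite cardsU1 in_setI (negbTE (eJ sJ)) /= add1n exprS.
case: ifP => _; last by rewrite mulr0 oppr0.
ring.
Qed.

End Main.

Theorem lemma3p1 (T : finType) (le : rel T)
  (le_refl : reflexive le) (le_anti : antisymmetric le) (le_trans : transitive le)
  (K : comNzRingType) (tau eta : T -> K) (Y D : {set T}) (e : T) :
  upclosed le Y D -> e \in maxs le Y ->
  let E := dclos le Y [set e] in
  piY le tau eta Y D - piY le tau eta (Y :\ e) (D :\ e) =
    if e \notin D then
      eta e * (\prod_(i in E :\ e) tau i) *: ('X^#|E| * piY le tau eta (Y :\: E) D)
    else if e \notin mins le D then 0
    else - ((\prod_(i in E :\ e) tau i) *: ('X^#|E| * piY le tau eta (Y :\: E) (D :\ e))).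
Proof.
move=> HD He E; rewrite /E {E}.
move: (He) => /maxsP [eY He'].
move: (HD) => /upclosedP [sDY HD'].
rewrite {1}/piY (bigID (fun I : {set T} => e \in I)) /=.
rewrite -addrA [X in _ + X](_ : _ = 0) ?addr0; last first.
  apply/eqP; rewrite subr_eq0; apply/eqP.
  rewrite /piY; apply: eq_big => I.
    rewrite !powersetE; apply/idP/idP.
      case/andP => /andP[sIY /downclosedP [_ dI]] eI.
      have sI : I \subset Y :\ e.
        apply/subsetP => x xI; rewrite in_setD1 (subsetP sIY x xI) andbT.
        by apply/negP => /eqP xe; rewrite -xe xI in eI.
      rewrite sI /=; apply/downclosedP; split => // i y iI; rewrite in_setD1.
      by case/andP => _; apply: dI.
    case/andP => sI /downclosedP [_ dI].
    have eI : e \notin I by apply/negP => /(subsetP sI); rewrite in_setD1 eqxx.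
    rewrite eI andbT; apply/andP; split.
      by apply: (subset_trans sI); apply/subsetP => x; rewrite in_setD1 => /andP[].
    apply/downclosedP; split.
      by apply: (subset_trans sI); apply/subsetP => x; rewrite in_setD1 => /andP[].
    move=> i y iI yY lyi; case: (eqVneq y e) => [ye|yne].
      have iY : i \in Y by move: (subsetP sI i iI); rewrite in_setD1 => /andP[].
      rewrite ye in lyi; have ie := He' i iY lyi.
      by rewrite -ie iI in eI.
    by apply: (dI i y iI) => //; rewrite in_setD1 yne.
  move=> /andP[_ eI]; congr (_ *: _); apply: phiD_ext.
  apply/setP => x; rewrite !in_setI in_setD1.
  by case: (eqVneq x e) => [->|] //=; rewrite (negbTE eI).
have EY : dclos le Y [set e] \subset Y.
  by apply/subsetP => x; rewrite dclos1E => /andP[].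
rewrite (reindex_onto (fun J => dclos le Y [set e] :|: J) (fun I => I :\: dclos le Y [set e])) /=; last first.
  move=> I /andP[/andP[_ /downclosedP [_ dI]] eI]; apply/setP => x.
  rewrite in_setU in_setD; case: (boolP (x \in dclos le Y [set e])) => //= xE.
  by move: xE; rewrite dclos1E => /andP[xY lxe]; apply/esym; apply: (dI e).
rewrite (eq_bigl (fun J => (J \in powerset (Y :\: dclos le Y [set e])) && downclosed le (Y :\: dclos le Y [set e]) J)); last first.
  move=> J /=; rewrite !powersetE; apply/idP/idP.
    case/andP => /andP[/andP[sIY /downclosedP [_ dI]] _] /eqP HJ.
    have JnE : forall x, x \in J -> x \notin dclos le Y [set e].
      by move=> x; rewrite -HJ in_setD => /andP[].
    have sJ : J \subset Y :\: dclos le Y [set e].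
      apply/subsetP => x xJ; rewrite in_setD JnE //=.
      by apply: (subsetP sIY); rewrite in_setU xJ orbT.
    rewrite sJ /=; apply/downclosedP; split => // i y iJ; rewrite in_setD => /andP[yE yY] lyi.
    have := dI i y; rewrite in_setU iJ orbT => /(_ isT yY lyi).
    by rewrite in_setU (negbTE yE).
  case/andP => sJ /downclosedP [_ dJ].
  have JE' : forall x, x \in J -> (x \in Y) && (x \notin dclos le Y [set e]).
    by move=> x xJ; have := subsetP sJ x xJ; rewrite in_setD andbC.
  apply/andP; split; last first.
    apply/eqP/setP => x; rewrite in_setD in_setU.
    case: (boolP (x \in J)) => xJ; last by rewrite orbF andNb.
    by case/andP: (JE' x xJ) => _ ->; rewrite orbT.
  rewrite in_setU eE // andbT; apply/andP; split.
    rewrite subUset EY /=; apply: (subset_trans sJ); exact: subsetDl.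
  apply/downclosedP; split.
    rewrite subUset EY /=; apply: (subset_trans sJ); exact: subsetDl.
  move=> i y; rewrite !in_setU => /orP[iE|iJ] yY lyi.
    by move: iE; rewrite !dclos1E yY => /andP[_ lie]; rewrite (le_trans _ _ _ lyi lie).
  case: (boolP (y \in dclos le Y [set e])) => //= yE.
  by apply: (dJ i) => //; rewrite in_setD yE.
case: (boolP (e \in D)) => eD /=.
  case: (boolP (e \in mins le D)) => em /=.
    rewrite /piY mulr_sumr scaler_sumr -sumrN; apply: eq_bigr => J /andP[].
    rewrite powersetE => sJ _.
    by rewrite phi_min // cardEU // exprD -scalerAr scalerA scaleNr.
  apply: big1 => J /andP[]; rewrite powersetE => sJ _.
  by rewrite phi_notmin // scale0r.
rewrite /piY mulr_sumr scaler_sumr; apply: eq_bigr => J /andP[].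
rewrite powersetE => sJ _.
by rewrite phi_notD // cardEU // exprD -scalerAr scalerA.
Qed.
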